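(* Consider the problem $\min_{x\in\mathbb{R}^n}\Phi(x)$, $\Phi=\Psi+\mathcal{X}$, $\Psi=f+h$, where $f$ is differentiable with $L_f$-Lipschitz gradient (possibly nonconvex), $h$ is convex and differentiable with $L_h$-Lipschitz gradient, $L_\Psi=L_f+L_h>0$, and $\mathcal{X}$ is a proper closed convex function with bounded domain. Let $\mathcal{P}(x,y,c):=\operatorname{argmin}_u\{\langle y,u\rangle+\frac{1}{2c}\|u-x\|^2+\mathcal{X}(u)\}$ and $\mathcal{G}(x,y,c):=\frac1c[x-\mathcal{P}(x,y,c)]$, and assume there is $M$ with $\|\mathcal{P}(x,y,c)\|\le M$ for all $c>0$, $x,y$. Run the composite AG method from $x_0$ ($x^{ag}_0=x_0$): for $k\ge1$, $$x^{md}_k=(1-\alpha_k)x^{ag}_{k-1}+\alpha_kx_{k-1},\quad x_k=\mathcal{P}(x_{k-1},\nabla\Psi(x^{md}_k),\lambda_k),\quad x^{ag}_k=\mathcal{P}(x^{md}_k,\nabla\Psi(x^{md}_k),\beta_k),$$ with $\alpha_k=\frac{2}{k+1}$, $\beta_k=\frac{1}{2L_\Psi}$, $\lambda_k=\frac{k\beta_k}{2}$. Assume an optimal solution $x^*$ of $\min\Phi$ exists. Then for any $N\ge1$, $$\min_{k=1,\ldots,N}\|\mathcal{G}(x^{md}_k,\nabla\Psi(x^{md}_k),\beta_k)\|^2\le24L_\Psi\Big[\frac{4L_\Psi\|x_0-x^*\|^2}{N^2(N+1)}+\frac{L_f}{N}(\|x^*\|^2+2M^2)\Big].$$ If in addition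 $L_f=0$, then $\Phi(x^{ag}_N)-\Phi(x^* )\le\frac{4L_\Psi\|x_0-x^*\|^2}{N(N+1)}$.
   Context: $\|\cdot\|$ is the Euclidean norm. *)

(* Defs.v *)
From HB Require Import structures.
From mathcomp Require Import all_boot all_order all_algebra.
From mathcomp Require Import all_classical all_reals all_analysis.
Set Implicit Arguments. Unset Strict Implicit. Unset Printing Implicit Defensive.
Import Order.TTheory GRing.Theory Num.Theory.
Import numFieldNormedType.Exports.
Local Open Scope ring_scope.
Local Open Scope classical_set_scope.

Section Defs.
Variables (R : realType) (n : nat).
Notation V := 'rV[R]_n.

Definition dot (u v : V) : R := \sum_(i < n) u ord0 i * v ord0 i.
Definition enorm (u : V) : R := Num.sqrt (dot u u).

Definition is_gradient (f : V -> R) (g : V -> V) : Prop :=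
  forall x, differentiable f x /\ forall v, 'd f x v = dot (g x) v.

Definition lipschitz_with (L : R) (g : V -> V) : Prop :=
  forall x y, enorm (g x - g y) <= L * enorm (x - y).

Definition convex_fun (h : V -> R) : Prop :=
  forall x y (t : R), 0 <= t <= 1 ->
    h (t *: x + (1 - t) *: y) <= t * h x + (1 - t) * h y.

Definition proper_fun (X : V -> \bar R) : Prop :=
  (forall x, X x != -oo%E) /\ (exists x, (X x < +oo)%E).

Definition closed_fun (X : V -> \bar R) : Prop :=
  closed [set p : V * R | (X p.1 <= p.2%:E)%E].

Definition convex_efun (X : V -> \bar R) : Prop :=
  forall (x y : V) (t : R), 0 < t < 1 ->
    (X (t *: x + (1 - t) *: y)%R <= (t%:E * X x + (1 - t)%:E * X y)%E)%E.

Definition bounded_dom (X : V -> \bar R) : Prop :=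
  exists B : R, forall x, (X x < +oo)%E -> enorm x <= B.

Definition prox_obj (X : V -> \bar R) (x y : V) (c : R) (u : V) : \bar R :=
  ((dot y u + enorm (u - x) ^+ 2 / (2 * c))%:E + X u)%E.

(* P x y c is a (the, by strong convexity) minimizer of prox_obj, c > 0 *)
Definition is_prox_map (X : V -> \bar R) (P : V -> V -> R -> V) : Prop :=
  forall x y c, 0 < c -> forall u, (prox_obj X x y c (P x y c) <= prox_obj X x y c u)%E.

Definition G_map (P : V -> V -> R -> V) (x y : V) (c : R) : V :=
  c^-1 *: (x - P x y c).

Definition ag_alpha (k : nat) : R := 2 / (k%:R + 1).
Definition ag_beta (L : R) : R := 1 / (2 * L).
Definition ag_lambda (L : R) (k : nat) : R := k%:R * ag_beta L / 2.

Definition ag_md (xag x : V) (k : nat) : V :=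
  (1 - ag_alpha k) *: xag + ag_alpha k *: x.

Fixpoint ag_state (P : V -> V -> R -> V) (gPsi : V -> V) (L : R) (x0 : V)
    (k : nat) : V * V :=
  match k with
  | 0 => (x0, x0)
  | k'.+1 =>
      let (x, xag) := ag_state P gPsi L x0 k' in
      let md := ag_md xag x k'.+1 in
      (P x (gPsi md) (ag_lambda L k'.+1), P md (gPsi md) (ag_beta L))
  end.

Definition ag_x P gPsi L x0 k : V := (ag_state P gPsi L x0 k).1.
Definition ag_xag P gPsi L x0 k : V := (ag_state P gPsi L x0 k).2.
(* x^md_k for k >= 1 *)
Definition ag_xmd P gPsi L x0 (k : nat) : V :=
  ag_md (ag_xag P gPsi L x0 k.-1) (ag_x P gPsi L x0 k.-1) k.

End Defs.

(* Main.v *)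
Require Import Defs.
From HB Require Import structures.
From mathcomp Require Import all_boot all_order all_algebra.
From mathcomp Require Import all_classical all_reals all_analysis.
From mathcomp Require Import ring lra.
Import Order.TTheory GRing.Theory Num.Theory.
Import numFieldNormedType.Exports.
Set Implicit Arguments. Unset Strict Implicit.
Local Open Scope ring_scope.
Local Open Scope classical_set_scope.
Section Dot.
Variables (R : realType) (n : nat).
Notation V := 'rV[R]_n.
Implicit Types u v w : V.

Lemma dotC u v : dot u v = dot v u.
Proof. by rewrite /dot; apply: eq_bigr => i _; rewrite mulrC. Qed.

Lemma dotDl u v w : dot (u + v) w = dot u w + dot v w.
Proof. by rewrite /dot -big_split; apply: eq_bigr => i _; rewrite mxE mulrDl. Qed.

Lemma dotZl (a : R) u w : dot (a *: u) w = a * dot u w.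
Proof. by rewrite /dot mulr_sumr; apply: eq_bigr => i _; rewrite mxE mulrA. Qed.

Lemma dotNl u w : dot (- u) w = - dot u w.
Proof. by rewrite -scaleN1r dotZl mulN1r. Qed.

Lemma dotBl u v w : dot (u - v) w = dot u w - dot v w.
Proof. by rewrite dotDl dotNl. Qed.

Lemma dotDr u v w : dot w (u + v) = dot w u + dot w v.
Proof. by rewrite dotC dotDl !(dotC w). Qed.

Lemma dotZr (a : R) u w : dot w (a *: u) = a * dot w u.
Proof. by rewrite dotC dotZl dotC. Qed.

Lemma dotNr u w : dot w (- u) = - dot w u.
Proof. by rewrite dotC dotNl dotC. Qed.

Lemma dotBr u v w : dot w (u - v) = dot w u - dot w v.
Proof. by rewrite dotDr dotNr. Qed.

Lemma dot0l w : dot 0 w = 0.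
Proof. by rewrite -(scale0r 0) dotZl mul0r. Qed.

Lemma dot_ge0 u : 0 <= dot u u.
Proof. by rewrite /dot; apply: sumr_ge0 => i _; rewrite -expr2 sqr_ge0. Qed.

Lemma dot_eq0 u : dot u u = 0 -> u = 0.
Proof.
move=> /eqP; rewrite /dot psumr_eq0 => [/allP H|i _]; last by rewrite -expr2 sqr_ge0.
apply/rowP => i; rewrite mxE.
have /H : i \in index_enum 'I_n by rewrite mem_index_enum.
by rewrite /= mulf_eq0 orbb => /eqP.
Qed.

Lemma enorm_sq u : enorm u ^+ 2 = dot u u.
Proof. by rewrite /enorm sqr_sqrtr // dot_ge0. Qed.

Lemma enorm_ge0 u : 0 <= enorm u.
Proof. exact: sqrtr_ge0. Qed.

Lemma enormZ (a : R) u : enorm (a *: u) = `|a| * enorm u.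
Proof. by rewrite /enorm dotZl dotZr mulrA -expr2 sqrtrM ?sqr_ge0 // sqrtr_sqr. Qed.

Lemma CS u v : dot u v <= enorm u * enorm v.
Proof.
have [->|u0] := eqVneq u 0; first by rewrite dot0l mulr_ge0 ?enorm_ge0.
have [->|v0] := eqVneq v 0; first by rewrite dotC dot0l mulr_ge0 ?enorm_ge0.
set a := enorm u; set b := enorm v.
have a0 : 0 < a.
  rewrite lt_neqAle enorm_ge0 andbT eq_sym; apply/eqP => /(congr1 (fun x => x ^+ 2)).
  by rewrite enorm_sq expr0n /= => /dot_eq0; apply/eqP.
have b0 : 0 < b.
  rewrite lt_neqAle enorm_ge0 andbT eq_sym; apply/eqP => /(congr1 (fun x => x ^+ 2)).
  by rewrite enorm_sq expr0n /= => /dot_eq0; apply/eqP.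
have := dot_ge0 (b *: u - a *: v).
rewrite !(dotBl, dotBr, dotZl, dotZr) -!enorm_sq -/a -/b (dotC v u) => H.
have H2 : 0 <= (a * b) * (a * b - dot u v) by nra.
by rewrite -subr_ge0 -(pmulr_rge0 _ (mulr_gt0 a0 b0)).
Qed.

Lemma sq_comb (a b : R) u v :
  dot (a *: u + b *: v) (a *: u + b *: v) =
  a ^+ 2 * dot u u + 2 * a * b * dot u v + b ^+ 2 * dot v v.
Proof. rewrite !(dotDl, dotDr, dotZl, dotZr) (dotC v u); ring. Qed.

Lemma sq_sub u v : dot (u - v) (u - v) = dot u u - 2 * dot u v + dot v v.
Proof. rewrite !(dotBl, dotBr) (dotC v u); ring. Qed.

Lemma sq_add_le u v : dot (u + v) (u + v) <= 2 * dot u u + 2 * dot v v.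
Proof.
have := dot_ge0 (u - v); rewrite sq_sub !(dotDl, dotDr) (dotC v u) => H; lra.
Qed.

Lemma sq_sub_le u v : dot (u - v) (u - v) <= 2 * dot u u + 2 * dot v v.
Proof. by have := sq_add_le u (- v); rewrite !(dotNl, dotNr) opprK. Qed.

End Dot.
Section Eps.
Variable R : realType.
Lemma eps_le (a b c : R) : 0 <= c -> (forall t, 0 < t < 1 -> a <= b + t * c) -> a <= b.
Proof.
move=> c0 H; apply/ler_addgt0Pr => e e0.
have ec : 0 < 2 * e + c by lra.
have t0 : 0 < e / (2 * e + c) by rewrite divr_gt0.
have t1 : e / (2 * e + c) < 1 by rewrite ltr_pdivrMr // mul1r; lra.
have := H _ (introT andP (conj t0 t1)).
have : e / (2 * e + c) * c <= e.
  rewrite mulrAC ler_pdivrMr //; nra.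
lra.
Qed.
End Eps.
Section Descent.
Variables (R : realType) (n : nat).
Notation V := 'rV[R]_n.

Lemma descent_up (F : V -> R) (G : V -> V) (L : R) :
  is_gradient F G -> lipschitz_with L G -> forall x y,
  F y <= F x + dot (G x) (y - x) + L / 2 * dot (y - x) (y - x).
Proof.
move=> HG HL x y; set d := y - x; set A := dot (G x) d; set B := L / 2 * dot d d.
pose psi := fun t : R => F (t *: d + x).
have dpsi (c : R) : is_derive c (1 : R) psi (dot (G (c *: d + x)) d).
  have [Fd FdE] := HG (c *: d + x).
  have der : derivable F (c *: d + x) d := diff_derivable Fd.
  have E : (fun h : R => h^-1 *: ((psi \o shift c) (h *: 1) - psi c)) =
           (fun h : R => h^-1 *: ((F \o shift (c *: d + x)) (h *: d) - F (c *: d + x))).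
    apply/funext => h /=; rewrite /psi; congr (_ *: (F _ - _)).
    by rewrite scalerDl [h *: 1]mulr1 addrA.
  split; first by rewrite /derivable E.
  by rewrite /derive E -/(derive F _ d) deriveE // FdE.
pose phi := psi - (A \*: id) - (B \*: (id ^+ 2)).
have dphi (c : R) : is_derive c (1 : R) phi (dot (G (c *: d + x)) d - A - B * (2 * c)).
  apply: is_derive_eq.
  by rewrite expr1 /GRing.scale /= !mulr1.
have cphi : {within `[0, 1], continuous phi}.
  apply: continuous_subspaceT => t.
  apply: differentiable_continuous; apply/derivable1_diffP.
  exact: (@ex_derive _ _ _ _ _ _ _ (dphi t)).
have [c cin E] := MVT ltr01 (fun c _ => dphi c) cphi.
  move: cin; rewrite in_itv /= => /andP[c0 c1].
have Hd : dot (G (c *: d + x)) d - A <= L * c * dot d d.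
  rewrite /A -dotBl.
  apply: le_trans; first exact: CS.
  have := HL (c *: d + x) x; rewrite addrK enormZ (ger0_norm (ltW c0)) => H.
  rewrite -enorm_sq expr2 mulrA; apply: ler_wpM2r; first exact: enorm_ge0.
  by rewrite -mulrA.
have Ev t : phi t = F (t *: d + x) - A * t - B * (t * t) by [].
move: E; rewrite !Ev scale1r scale0r add0r /d subrK; rewrite /B in Hd *; lra.
Qed.

Lemma descent_low (F : V -> R) (G : V -> V) (L : R) :
  is_gradient F G -> lipschitz_with L G -> forall x y,
  F x + dot (G x) (y - x) <= F y + L / 2 * dot (y - x) (y - x).
Proof.
move=> HG HL x y.
have HG' : is_gradient (fun u => - F u) (fun u => - G u).
  move=> u; have [Fd FdE] := HG u.
  have Fd' : differentiable (fun u => - F u) u.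
    exact: differentiableN.
  split => // v.
  rewrite (_ : (fun u => - F u) = - F) //.
  rewrite diffN //; change (- ('d F u v) = dot (- G u) v). by rewrite FdE dotNl.
have HL' : lipschitz_with L (fun u => - G u).
  move=> u' w; rewrite -opprD.
  by have := HL u' w; rewrite /enorm dotNl dotNr opprK.
have := descent_up HG' HL' x y; rewrite dotNl; lra.
Qed.
End Descent.
Section Rec.
Variables (R : realType) (n : nat).
Notation V := 'rV[R]_n.
Variables (P : V -> V -> R -> V) (gP : V -> V) (L : R) (x0 : V).

Lemma ag_x0 : ag_x P gP L x0 0 = x0. Proof. by []. Qed.
Lemma ag_xag0 : ag_xag P gP L x0 0 = x0. Proof. by []. Qed.

Lemma ag_xS k : ag_x P gP L x0 k.+1 =
  P (ag_x P gP L x0 k) (gP (ag_xmd P gP L x0 k.+1)) (ag_lambda L k.+1).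
Proof. by rewrite /ag_xmd /ag_x /ag_xag /=; case: (ag_state P gP L x0 k). Qed.

Lemma ag_xagS k : ag_xag P gP L x0 k.+1 =
  P (ag_xmd P gP L x0 k.+1) (gP (ag_xmd P gP L x0 k.+1)) (ag_beta L).
Proof. by rewrite /ag_xmd /ag_x /ag_xag /=; case: (ag_state P gP L x0 k). Qed.

Lemma ag_xmdS k : ag_xmd P gP L x0 k.+1 =
  (1 - ag_alpha R k.+1) *: ag_xag P gP L x0 k + ag_alpha R k.+1 *: ag_x P gP L x0 k.
Proof. by []. Qed.
End Rec.
Section BM.
Variable R : realType.
Lemma bigmin_le (F : nat -> R) (x0 : R) (r : seq nat) k : k \in r ->
  \big[Num.min/x0]_(i <- r) F i <= F k.
Proof.
elim: r => // i r IH; rewrite inE big_cons => /orP[/eqP->|kr].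
  by rewrite ge_min lexx.
by rewrite ge_min IH ?orbT.
Qed.

Lemma sum_w (N : nat) : \sum_(1 <= k < N.+1) (k%:R * (k%:R + 1) / 2 : R) =
  N%:R * (N%:R + 1) * (N%:R + 2) / 6.
Proof.
elim: N => [|N IH]; first by rewrite big_geq // !mul0r.
by rewrite big_nat_recr //= IH -natr1; field.
Qed.
End BM.
Section Main.
Variables (R : realType) (n : nat).
Notation V := 'rV[R]_n.
Variables (f h : V -> R) (gf gh : V -> V) (X : V -> \bar R) (P : V -> V -> R -> V)
  (Lf Lh M : R).
Hypotheses (Hf : is_gradient f gf) (Lf0 : 0 <= Lf) (HfL : lipschitz_with Lf gf)
  (Hh : is_gradient h gh) (hconv : convex_fun h) (Lh0 : 0 <= Lh)
  (HhL : lipschitz_with Lh gh) (HL : 0 < Lf + Lh) (Xprop : proper_fun X)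
  (Xconv : convex_efun X) (HP : is_prox_map X P)
  (HM : forall x y c, 0 < c -> enorm (P x y c) <= M).

Local Notation L := (Lf + Lh).
Local Notation g := (fun u => gf u + gh u).
Local Notation Psi := (fun u => f u + h u).
Local Notation sq := (fun u : V => dot u u).
Local Notation Xr := (fun u => fine (X u)).

Lemma h_grad x y : h x + dot (gh x) (y - x) <= h y.
Proof.
apply: (@eps_le _ _ _ (Lh / 2 * dot (y - x) (y - x))).
  by apply: mulr_ge0; [rewrite divr_ge0 | exact: dot_ge0].
move=> t /andP[t0 t1].
have Hc := hconv y x (introT andP (conj (ltW t0) (ltW t1))).
have E : t *: y + (1 - t) *: x = t *: (y - x) + x.
  by apply/rowP => i; rewrite !mxE; ring.
rewrite E in Hc.
have Hd := descent_low Hh HhL x (t *: (y - x) + x).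
rewrite addrK dotZr dotZl dotZr in Hd.
set gd := dot (gh x) (y - x) in Hd *.
set s := dot (y - x) (y - x) in Hd *.
have key : t * (h x + gd) <= t * (h y + t * (Lh / 2 * s)) by lra.
by rewrite ler_pM2l in key.
Qed.

Lemma Psi_up x y : Psi y <= Psi x + dot (g x) (y - x) + L / 2 * sq (y - x).
Proof.
have H1 := descent_up Hf HfL x y; have H2 := descent_up Hh HhL x y.
rewrite /= dotDl; lra.
Qed.

Lemma Psi_low x y : Psi x + dot (g x) (y - x) <= Psi y + Lf / 2 * sq (y - x).
Proof.
have H1 := descent_low Hf HfL x y; have H2 := h_grad x y.
rewrite /= dotDl; lra.
Qed.

Lemma Xfin u : (X u < +oo)%E -> X u = (Xr u)%:E.
Proof. by move: (Xprop.1 u); case: (X u). Qed.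

Lemma P_dom x y c : 0 < c -> (X (P x y c) < +oo)%E.
Proof.
move=> c0; have [x1 Hx1] := Xprop.2.
have := HP x y c0 x1; rewrite /prox_obj (Xfin Hx1).
move: (Xprop.1 (P x y c)); case: (X (P x y c)) => [r _ _| |] //; exact: ltry.
Qed.

Lemma P_opt x y c u : 0 < c -> (X u < +oo)%E ->
  dot y (P x y c) + sq (P x y c - x) / (2 * c) + Xr (P x y c)
  <= dot y u + sq (u - x) / (2 * c) + Xr u.
Proof.
move=> c0 Hu; have := HP x y c0 u.
by rewrite /prox_obj (Xfin Hu) (Xfin (P_dom x y c0)) -!EFinD lee_fin !enorm_sq.
Qed.

Lemma X_conv a b t : 0 < t < 1 -> (X a < +oo)%E -> (X b < +oo)%E ->
  (X (t *: a + (1 - t) *: b) < +oo)%E /\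
  Xr (t *: a + (1 - t) *: b) <= t * Xr a + (1 - t) * Xr b.
Proof.
move=> t01 Ha Hb; have := Xconv a b t01.
rewrite (Xfin Ha) (Xfin Hb) -!EFinM -EFinD.
move: (Xprop.1 (t *: a + (1 - t) *: b)); case: (X _) => // r _.
by rewrite lee_fin /= => H; split; [exact: ltry | exact: H].
Qed.

Lemma P_three x y c u : 0 < c -> (X u < +oo)%E ->
  dot y (P x y c) + sq (P x y c - x) / (2 * c) + Xr (P x y c)
  <= dot y u + sq (u - x) / (2 * c) - sq (u - P x y c) / (2 * c) + Xr u.
Proof.
move=> c0 Hu; set p := P x y c.
have Hp := P_dom x y c0.
apply: (@eps_le _ _ _ (sq (u - p) / (2 * c))).
  by apply: divr_ge0; [exact: dot_ge0 | lra].
move=> t /andP[t0 t1].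
have [Hut Xut] := X_conv (introT andP (conj t0 t1)) Hu Hp.
have Ho := P_opt x y c0 Hut.
have E : t *: u + (1 - t) *: p - x = t *: (u - x) + (1 - t) *: (p - x).
  by rewrite !scalerBr addrACA -opprD -scalerDl subrKC scale1r.
have E2 : u - p = (u - x) - (p - x) by rewrite opprB addrA subrK.
rewrite E sq_comb (dotDr (t *: u) ((1 - t) *: p) y) (dotZr t u y) (dotZr (1 - t) p y) in Ho.
rewrite E2 (sq_sub (u - x) (p - x)).
set s1 := dot (u - x) (u - x) in Ho *; set s2 := dot (p - x) (p - x) in Ho *.
set s12 := dot (u - x) (p - x) in Ho *.
have key : t * (dot y p + s2 / (2 * c) + Xr p) <=
  t * (dot y u + s1 / (2 * c) - (s1 - 2 * s12 + s2) / (2 * c) + Xr u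
       + t * ((s1 - 2 * s12 + s2) / (2 * c))).
  have ic : 0 < (2 * c)^-1 by rewrite invr_gt0; lra.
  rewrite !mulrA in Ho *; nra.
by rewrite ler_pM2l in key.
Qed.


Lemma inv2 (c K : R) : 0 < c -> 2 * c * K = 1 -> (2 * c)^-1 = K.
Proof.
move=> c0 H; have c2 : 2 * c != 0 by rewrite mulf_neq0 // gt_eqF.
by apply: (mulfI c2); rewrite mulfV // H.
Qed.

Lemma step (a b z : V) (al lam bet : R) :
  0 < al < 1 -> 0 < lam -> 2 * bet * L = 1 -> al * lam <= bet ->
  (X a < +oo)%E -> (X z < +oo)%E ->
  let xm := (1 - al) *: a + al *: b in
  let gg := g xm in
  let p := P b gg lam in let q := P xm gg bet in
  Psi q + Xr q - (Psi z + Xr z) <=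
    (1 - al) * (Psi a + Xr a - (Psi z + Xr z))
    + al / (2 * lam) * (sq (z - b) - sq (z - p))
    + Lf / 2 * ((1 - al) * sq (a - xm) + al * sq (z - xm))
    - L / 2 * sq (q - xm).
Proof.
move=> al01 lam0 Hb alb Ha Hz; cbv zeta beta.
have lf0 := Lf0; have lh0 := Lh0; have hl := HL.
set xm := (1 - al) *: a + al *: b.
set gg := gf xm + gh xm.
set p := P b gg lam; set q := P xm gg bet.
have /andP[al0 al1] := al01.
have bet0 : 0 < bet.
  have : 0 < 2 * bet * L by rewrite Hb.
  by rewrite pmulr_lgt0 // pmulr_rgt0.
have Hp : (X p < +oo)%E := P_dom b gg lam0.
have [Hu Xu] := X_conv al01 Hp Ha.
set u := al *: p + (1 - al) *: a in Hu Xu.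
have H1 := Psi_up xm q.
have H2 := P_opt xm gg bet0 Hu.
have H4 := Psi_low xm a.
have H6 := Psi_low xm z.
have H5 := P_three b gg lam0 Hz.
have E1 : u - xm = al *: (p - b).
  by apply/rowP => i; rewrite !mxE; ring.
rewrite /= E1 dotZl dotZr /u (dotDr (al *: p)) (dotZr al p) (dotZr (1 - al) a) (inv2 bet0 Hb) in H2.
rewrite dotBr /= in H1; rewrite dotBr /= in H4; rewrite dotBr /= in H6.
rewrite /= in H5.
have spb := dot_ge0 (p - b).
have F7 : al * (al * dot (p - b) (p - b)) * L <= al / (2 * lam) * dot (p - b) (p - b).
  have K : al ^+ 2 * L <= al / (2 * lam).
    rewrite ler_pdivlMr ?mulr_gt0 //.
    have : 0 <= al * L * (bet - al * lam) by apply: mulr_ge0; [apply: mulr_ge0; lra | lra].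
    nra.
  have := ler_wpM2r spb K; lra.
have al1' : 0 <= 1 - al by lra.
have H4' := ler_wpM2l al1' H4.
set Gz := dot gg z in H5 H6.
have H5' := ler_wpM2l (ltW al0) H5.
have H6' := ler_wpM2l (ltW al0) H6.
rewrite /= in Xu H1 H2 H4' H5' H6' F7.
lra.
Qed.

Lemma step1 (x0 z : V) (lam bet : R) :
  2 * bet * L = 1 -> 4 * lam * L = 1 -> (X z < +oo)%E ->
  let gg := g x0 in
  let p := P x0 gg lam in let q := P x0 gg bet in
  Psi q + Xr q - (Psi z + Xr z) + 2 * L * sq (z - p) <=
    2 * L * sq (z - x0) + Lf * sq (z - p) - L / 2 * sq (q - x0).
Proof.
move=> Hb Hl Hz; cbv zeta beta.
have lf0 := Lf0; have lh0 := Lh0; have hl := HL.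
set gg := gf x0 + gh x0.
set p := P x0 gg lam; set q := P x0 gg bet.
have bet0 : 0 < bet.
  have : 0 < 2 * bet * L by rewrite Hb.
  by rewrite pmulr_lgt0 // pmulr_rgt0.
have lam0 : 0 < lam.
  have : 0 < 4 * lam * L by rewrite Hl.
  by rewrite pmulr_lgt0 // pmulr_rgt0.
have Hl' : 2 * lam * (2 * L) = 1 by rewrite -[RHS]Hl; ring.
have Hp : (X p < +oo)%E := P_dom x0 gg lam0.
have H1 := Psi_up x0 q.
have H2 := P_opt x0 gg bet0 Hp.
have H6 := Psi_low x0 z.
have H5 := P_three x0 gg lam0 Hz.
rewrite /= (inv2 bet0 Hb) in H2.
rewrite /= (inv2 lam0 Hl') in H5.
rewrite dotBr /= in H1; rewrite dotBr /= in H6.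
have E : z - x0 = (z - p) + (p - x0) by rewrite addrA subrK.
have H7 := sq_add_le (z - p) (p - x0); rewrite -E in H7.
have H8 := ler_wpM2l lf0 H7.
have H9 : Lf * dot (p - x0) (p - x0) <= L * dot (p - x0) (p - x0).
  by apply: ler_wpM2r; [exact: dot_ge0 | lra].
lra.
Qed.

Lemma sq_sym (u v : V) : sq (u - v) = sq (v - u).
Proof. by rewrite /= -opprB dotNl dotNr opprK. Qed.

Lemma sqP x y c : 0 < c -> sq (P x y c) <= M ^+ 2.
Proof.
move=> c0; have H := HM x y c0; have H0 := enorm_ge0 (P x y c).
rewrite /= -enorm_sq; nra.
Qed.

Lemma E_bound (a b z : V) (al M2 : R) : 0 <= al <= 1 ->
  sq a <= M2 -> sq b <= M2 ->
  (1 - al) * sq (a - ((1 - al) *: a + al *: b))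
  + al * sq (z - ((1 - al) *: a + al *: b)) <= 2 * al * (sq z + 2 * M2).
Proof.
move=> /andP[al0 al1] Ha Hb; rewrite /=.
set xm := (1 - al) *: a + al *: b.
have E1 : a - xm = al *: (a - b) by apply/rowP => i; rewrite !mxE; ring.
rewrite E1 dotZl dotZr.
have Hab := sq_sub_le a b.
have Hz := sq_sub_le z xm.
have Hxm : sq xm <= M2.
  rewrite /= /xm sq_comb.
  have := dot_ge0 (a - b); rewrite sq_sub => H.
  rewrite /= in Ha Hb.
  have H1 : 0 <= al * (1 - al) by apply: mulr_ge0; lra.
  have H2 := ler_wpM2l H1 H.
  nra.
rewrite /= in Hxm Ha Hb Hab Hz.
have M20 : 0 <= M2 by have := dot_ge0 a; lra.
have H3 : (1 - al) * al <= 1 / 4 by have := sqr_ge0 (2 * al - 1); rewrite expr2; nra.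
have H4 : (1 - al) * (al * (al * dot (a - b) (a - b))) <= (1 - al) * al * al * (4 * M2).
  have Hs : dot (a - b) (a - b) <= 4 * M2 by lra.
  have x0 : 0 <= (1 - al) * al * al by apply: mulr_ge0; [apply: mulr_ge0|]; lra.
  have := ler_wpM2l x0 Hs; lra.
have H5 : al * dot (z - xm) (z - xm) <= al * (2 * dot z z + 2 * M2).
  by apply: ler_wpM2l => //; lra.
have H7 : 0 <= al * M2 by apply: mulr_ge0.
have H6 : (1 - al) * al * al * (4 * M2) <= al * M2 by nra.
lra.
Qed.

Lemma Gs_eq (xm : V) (bet : R) : 2 * bet * L = 1 ->
  sq (G_map P xm (g xm) bet) = 4 * L ^+ 2 * sq (P xm (g xm) bet - xm).
Proof.
move=> Hb; have hl := HL.
have bet0 : 0 < bet.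
  have : 0 < 2 * bet * L by rewrite Hb.
  by rewrite pmulr_lgt0 // pmulr_rgt0.
have ib : bet^-1 = 2 * L.
  apply: (mulfI (lt0r_neq0 bet0)); rewrite mulfV ?lt0r_neq0 // -[LHS]Hb; ring.
rewrite /G_map /= dotZl dotZr ib (sq_sym xm) /=; ring.
Qed.

Variables (x0 z : V).
Hypothesis Hopt : forall x,
  ((f z + h z)%:E + X z <= (f x + h x)%:E + X x)%E.

Lemma Hz : (X z < +oo)%E.
Proof.
have [x1 H1] := Xprop.2; have := Hopt x1; rewrite (Xfin H1).
move: (Xprop.1 z); case: (X z) => // r _ _; exact: ltry.
Qed.

Local Notation gP := (fun x => gf x + gh x).
Local Notation xk k := (ag_x P gP L x0 k).
Local Notation xag k := (ag_xag P gP L x0 k).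
Local Notation xmd k := (ag_xmd P gP L x0 k).

Definition Dlt k := f (xag k) + h (xag k) + Xr (xag k) - (f z + h z + Xr z).
Definition Dk k := dot (z - xk k) (z - xk k).
Definition Gs k := dot (G_map P (xmd k) (gP (xmd k)) (ag_beta L))
                       (G_map P (xmd k) (gP (xmd k)) (ag_beta L)).
Definition CC := dot z z + 2 * M ^+ 2.
Definition w (k : nat) : R := k%:R * (k%:R + 1) / 2.

Lemma betaL : 2 * ag_beta L * L = 1.
Proof. have hl := HL; rewrite /ag_beta; field; lra. Qed.

Lemma beta_gt0 : 0 < ag_beta L.
Proof. have hl := HL; rewrite /ag_beta divr_gt0 //; lra. Qed.

Lemma one_step k : (0 < k)%N ->
  w k.+1 * Dlt k.+1 + 2 * L * Dk k.+1 + w k.+1 * Gs k.+1 / (8 * L)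
  <= w k * Dlt k + 2 * L * Dk k + Lf * CC * k.+1%:R.
Proof.
move=> k0.
have lf0 := Lf0; have lh0 := Lh0; have hl := HL.
have K1 : 1 <= k%:R :> R by rewrite ler1n.
set al := ag_alpha R k.+1; set lam := ag_lambda L k.+1; set bet := ag_beta L.
have Hb : 2 * bet * L = 1 := betaL.
have bet0 : 0 < bet := beta_gt0.
have eal : al = 2 / (k%:R + 2) by rewrite /al /ag_alpha -natr1; congr (_ / _); ring.
have elam : lam = (k%:R + 1) / (4 * L).
  by rewrite /lam /ag_lambda /bet /ag_beta -natr1; field; lra.
have al01 : 0 < al < 1.
  rewrite eal; apply/andP; split; first by rewrite divr_gt0 //; lra.
  by rewrite ltr_pdivrMr; lra.
have lam0 : 0 < lam by rewrite elam divr_gt0 //; lra.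
have alb : al * lam <= bet.
  rewrite eal elam /bet /ag_beta.
  have -> : 2 / (k%:R + 2) * ((k%:R + 1) / (4 * L)) = 1 / (2 * L) * ((k%:R + 1) / (k%:R + 2)).
    by field; lra.
  apply: ler_piMr; first by rewrite divr_ge0 //; lra.
  by rewrite ler_pdivrMr; lra.
have Hxa : (X (xag k) < +oo)%E.
  by case: k k0 {K1 al lam eal elam al01 lam0 alb} => // k _; rewrite ag_xagS; apply: P_dom.
have S := step (xk k) al01 lam0 Hb alb Hxa Hz.
cbv zeta beta in S.
rewrite /Dlt /Dk /Gs ag_xagS ag_xS ag_xmdS -/al -/lam -/bet.
rewrite Gs_eq //.
set xm := (1 - al) *: xag k + al *: xk k in S *.
set gg := gf xm + gh xm in S *.
set p := P (xk k) gg lam in S *; set q := P xm gg bet in S *.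
set A := (f (xag k) + h (xag k) + fine (X (xag k)) - (f z + h z + fine (X z))) in S *.
set E := (1 - al) * dot (xag k - xm) (xag k - xm) + al * dot (z - xm) (z - xm) in S.
set Q := dot (q - xm) (q - xm) in S *.
set W := w k.+1.
have W0 : 0 <= W by rewrite /W /w divr_ge0 // mulr_ge0 //; lra.
have Ha : dot (xag k) (xag k) <= M ^+ 2.
  by case: k k0 {K1 al lam eal elam al01 lam0 alb Hxa S xm gg p q A E Q W W0}
     => // k _; rewrite ag_xagS; apply: sqP.
have Hb' : dot (xk k) (xk k) <= M ^+ 2.
  case: k k0 {K1 al lam eal elam al01 lam0 alb Hxa S xm gg p q A E Q W W0 Ha}
     => // k _; rewrite ag_xS; apply: sqP.
  rewrite /ag_lambda divr_gt0 // mulr_gt0 ?beta_gt0 //; lra.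
have al01w : 0 <= al <= 1 by case/andP: al01 => *; apply/andP; split; lra.
have HE : E <= 2 * al * CC := E_bound z al01w Ha Hb'.
have c1 : W * (1 - al) = w k by rewrite /W /w eal -natr1; field; lra.
have c2 : W * (al / (2 * lam)) = 2 * L by rewrite /W /w eal elam -natr1; field; lra.
have c3 : W * al = k.+1%:R by rewrite /W /w eal -natr1; field; lra.
have i1 : W * ((1 - al) * A) = w k * A by rewrite mulrA c1.
set B := dot (z - xk k) (z - xk k) - dot (z - p) (z - p) in S.
have i2 : W * (al / (2 * lam) * B) = 2 * L * B by rewrite mulrA c2.
have i3 : W * (Lf / 2 * E) <= Lf * CC * k.+1%:R.
  have : W * (Lf / 2 * E) <= W * (Lf / 2 * (2 * al * CC)).
    by apply: ler_wpM2l => //; apply: ler_wpM2l => //; rewrite divr_ge0.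
  suff -> : W * (Lf / 2 * (2 * al * CC)) = Lf * CC * k.+1%:R by [].
  by rewrite -c3; field.
have i4 : W * (L / 2 * Q) = W * (4 * L ^+ 2 * Q) / (8 * L) by field; lra.
have S' := ler_wpM2l W0 S.
rewrite /B in i2 S'.
lra.
Qed.


Lemma first_step : Dlt 1 + 2 * L * Dk 1 + Gs 1 / (8 * L) <= 2 * L * Dk 0 + 2 * Lf * CC.
Proof.
have lf0 := Lf0; have lh0 := Lh0; have hl := HL.
have Hb : 2 * ag_beta L * L = 1 := betaL.
set lam := ag_lambda L 1.
have Hl : 4 * lam * L = 1 by rewrite /lam /ag_lambda /ag_beta; field; lra.
have lam0 : 0 < lam by rewrite /lam /ag_lambda mulr1n mul1r divr_gt0 ?beta_gt0.
have E : xmd 1 = x0.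
  rewrite ag_xmdS ag_xag0 ag_x0 (_ : ag_alpha R 1 = 1); last first.
    by rewrite /ag_alpha; field.
  by rewrite subrr scale0r add0r scale1r.
have S := step1 x0 Hb Hl Hz.
cbv zeta beta in S.
rewrite /Dlt /Dk /Gs ag_xagS ag_xS Gs_eq // E ag_x0 -/lam.
set p := P x0 (gf x0 + gh x0) lam in S *.
set q := P x0 (gf x0 + gh x0) (ag_beta L) in S *.
have Hp : dot p p <= M ^+ 2 by apply: sqP.
have H1 := sq_sub_le z p.
have H2 : Lf * dot (z - p) (z - p) <= Lf * (2 * CC).
  by apply: ler_wpM2l => //; rewrite /CC; have := sqr_ge0 M; lra.
have i4 : 4 * L ^+ 2 * dot (q - x0) (q - x0) / (8 * L) = L / 2 * dot (q - x0) (q - x0).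
  by field; lra.
lra.
Qed.

Lemma sum_bound N : (0 < N)%N ->
  w N * Dlt N + 2 * L * Dk N + \sum_(1 <= k < N.+1) w k * Gs k / (8 * L)
  <= 2 * L * Dk 0 + Lf * CC * (N%:R * (N%:R + 1) / 2 + 1).
Proof.
elim: N => // N IH _.
case: N IH => [_|N IH].
  rewrite big_nat1.
  have := first_step.
  have w1 : w 1 = 1 by rewrite /w mulr1n; field.
  have e : Lf * CC * (1%:R * (1%:R + 1) / 2 + 1) = 2 * Lf * CC by rewrite mulr1n; field.
  rewrite w1 e; lra.
rewrite big_nat_recr //=.
have H1 := one_step (ltn0Sn N).
have H2 := IH isT.
have e : Lf * CC * (N.+2%:R * (N.+2%:R + 1) / 2 + 1) =
   Lf * CC * (N.+1%:R * (N.+1%:R + 1) / 2 + 1) + Lf * CC * N.+2%:R.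
  by rewrite -(natr1 N.+1); field.
rewrite e; lra.
Qed.

Lemma Dlt_ge0 N : (0 < N)%N -> 0 <= Dlt N.
Proof.
case: N => // N _.
have Hq : (X (xag N.+1) < +oo)%E by rewrite ag_xagS; apply: P_dom; exact: beta_gt0.
have := Hopt (xag N.+1); rewrite (Xfin Hq) (Xfin Hz) -!EFinD lee_fin /Dlt => H.
by rewrite subr_ge0.
Qed.

Lemma final N : (0 < N)%N ->
  \big[Num.min/Gs 1]_(1 <= k < N.+1) Gs k
    <= 48 * L * (2 * L * Dk 0 + Lf * CC * (N%:R * (N%:R + 1) / 2 + 1))
        / (N%:R * (N%:R + 1) * (N%:R + 2))
  /\ (Lf = 0 -> Dlt N <= 4 * L * Dk 0 / (N%:R * (N%:R + 1))).
Proof.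
move=> N0; have lf0 := Lf0; have hl := HL.
have SB := sum_bound N0.
have DltN := Dlt_ge0 N0.
have DkN : 0 <= Dk N := dot_ge0 _.
have K1 : 1 <= N%:R :> R by rewrite ler1n.
have w0 k : 0 <= w k by rewrite /w divr_ge0 // mulr_ge0 // addr_ge0.
set m := \big[Num.min/Gs 1]_(1 <= k < N.+1) Gs k.
set T := \sum_(1 <= k < N.+1) w k * Gs k.
have Hm : m * \sum_(1 <= k < N.+1) w k <= T.
  rewrite mulr_sumr /T; apply: ler_sum_nat => k /andP[k1 kN].
  rewrite mulrC; apply: ler_wpM2l => //; apply: bigmin_le.
  by rewrite mem_index_iota k1 kN.
rewrite sum_w in Hm.
rewrite -mulr_suml -/T in SB.
have T0 : 0 <= T by apply: sumr_ge0 => k _; apply: mulr_ge0 => //; exact: dot_ge0.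
have wN : w N * Dlt N >= 0 by apply: mulr_ge0.
have LD : 0 <= L * Dk N by apply: mulr_ge0 => //; lra.
split.
  have HT : T <= 8 * L * (2 * L * Dk 0 + Lf * CC * (N%:R * (N%:R + 1) / 2 + 1)).
    have : T / (8 * L) <= 2 * L * Dk 0 + Lf * CC * (N%:R * (N%:R + 1) / 2 + 1) by lra.
    by rewrite ler_pdivrMr ?mulr_gt0 // mulrC.
  rewrite ler_pdivlMr; last by rewrite !mulr_gt0 //; lra.
  have e : m * (N%:R * (N%:R + 1) * (N%:R + 2)) = 6 * (m * (N%:R * (N%:R + 1) * (N%:R + 2) / 6)).
    by field.
  rewrite e; lra.
move=> Lf00.
have HT : w N * Dlt N <= 2 * L * Dk 0.
  have T8 : 0 <= T / (8 * L) by rewrite divr_ge0 // mulr_ge0 //; lra.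
  have z0 : Lf * CC * (N%:R * (N%:R + 1) / 2 + 1) = 0 by rewrite Lf00 !mul0r.
  lra.
rewrite ler_pdivlMr; last by rewrite mulr_gt0 //; lra.
have e : Dlt N * (N%:R * (N%:R + 1)) = 2 * (w N * Dlt N) by rewrite /w; field.
rewrite e; lra.
Qed.
End Main.
Theorem corollary2 (R : realType) (n : nat)
  (f h : 'rV[R]_n -> R) (gf gh : 'rV[R]_n -> 'rV[R]_n)
  (X : 'rV[R]_n -> \bar R) (P : 'rV[R]_n -> 'rV[R]_n -> R -> 'rV[R]_n)
  (Lf Lh M : R) (x0 xstar : 'rV[R]_n) :
  is_gradient f gf -> 0 <= Lf -> lipschitz_with Lf gf ->
  is_gradient h gh -> convex_fun h -> 0 <= Lh -> lipschitz_with Lh gh ->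
  0 < Lf + Lh ->
  proper_fun X -> closed_fun X -> convex_efun X -> bounded_dom X ->
  is_prox_map X P ->
  (forall x y c, 0 < c -> enorm (P x y c) <= M) ->
  (forall x, ((f xstar + h xstar)%:E + X xstar <= (f x + h x)%:E + X x)%E) ->
  let LPsi := Lf + Lh in
  let gPsi := fun x => gf x + gh x in
  let Phi := fun x => ((f x + h x)%:E + X x)%E in
  let xmd := ag_xmd P gPsi LPsi x0 in
  let xag := ag_xag P gPsi LPsi x0 in
  let Gn := fun k : nat =>
    enorm (G_map P (xmd k) (gPsi (xmd k)) (ag_beta LPsi)) ^+ 2 in
  forall N : nat, (1 <= N)%N ->
    \big[Num.min/Gn 1%N]_(1 <= k < N.+1) Gn k
      <= 24%:R * LPsi * (4%:R * LPsi * enorm (x0 - xstar) ^+ 2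
                          / (N%:R ^+ 2 * (N%:R + 1))
                        + Lf / N%:R * (enorm xstar ^+ 2 + 2%:R * M ^+ 2))
    /\ (Lf = 0 ->
        (Phi (xag N) - Phi xstar
           <= (4%:R * LPsi * enorm (x0 - xstar) ^+ 2 / (N%:R * (N%:R + 1)))%:E)%E).
Proof.
move=> Hf Lf0 HfL Hh hconv Lh0 HhL HL Xprop _ Xconv _ HP HM Hopt
  LPsi gPsi Phi xmd xag Gn N HN.
have [H1 H2] := final Hf Lf0 HfL Hh hconv Lh0 HhL HL Xprop Xconv HP HM x0 Hopt HN.
have eG k : Gn k = Gs gf gh P Lf Lh x0 k by rewrite /Gn enorm_sq.
have eD : Dk gf gh P Lf Lh x0 xstar 0 = enorm (x0 - xstar) ^+ 2.
  by rewrite /Dk ag_x0 enorm_sq -opprB dotNl dotNr opprK.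
have eC : CC M xstar = enorm xstar ^+ 2 + 2%:R * M ^+ 2 by rewrite /CC enorm_sq.
rewrite eD eC in H1 H2.
have K1 : 1 <= N%:R :> R by rewrite ler1n.
have hl := HL; have lf0 := Lf0.
split.
  rewrite (eq_bigr _ (fun k _ => eG k)) eG.
  apply: (le_trans H1).
  set D := enorm (x0 - xstar) ^+ 2; set C := enorm xstar ^+ 2 + 2%:R * M ^+ 2.
  have D0 : 0 <= D by rewrite /D sqr_ge0.
  have C0 : 0 <= C by rewrite /C addr_ge0 ?sqr_ge0 // mulr_ge0 ?sqr_ge0.
  rewrite -subr_ge0 /LPsi.
  set K := N%:R.
  have -> : 24%:R * (Lf + Lh) * (4%:R * (Lf + Lh) * D / (K ^+ 2 * (K + 1)) + Lf / K * C) -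
    48 * (Lf + Lh) * (2 * (Lf + Lh) * D + Lf * C * (K * (K + 1) / 2 + 1)) /
    (K * (K + 1) * (K + 2)) =
    (192 * (Lf + Lh) * ((Lf + Lh) * D) + 48 * ((Lf + Lh) * Lf * C) * K ^+ 2)
      / (K ^+ 2 * (K + 1) * (K + 2)).
    by field; lra.
  apply: divr_ge0; last by rewrite !mulr_ge0 //; lra.
  have L0 : 0 <= Lf + Lh by lra.
  have K2 : 0 <= K ^+ 2 := sqr_ge0 K.
  apply: addr_ge0; repeat apply: mulr_ge0 => //.
move=> Lf00; have := H2 Lf00.
have Hq : (X (xag N) < +oo)%E.
  by case: N HN {H1 H2 K1} => // N _; rewrite /xag ag_xagS; apply: (P_dom Xprop HP); rewrite /ag_beta /LPsi divr_gt0 //; lra.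
have Hzz := Hz Xprop Hopt.
rewrite /Phi /Dlt (Xfin Xprop Hq) (Xfin Xprop Hzz) => H.
by rewrite -!EFinD lee_fin; move: H => /=.
Qed.
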